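(* Let $\mathbf{k}$ be a field and $m\ge2$. Let $u\in{\sf{Bir}}(\mathbb{P}^m_\mathbf{k})$ be a diagonal linear transformation, $u(x_1,\dots,x_m)=(u_1x_1,\dots,u_mx_m)$ in affine coordinates, with $u_i\in\mathbf{k}^\times$. Then $u$ is at least exponentially distorted in ${\sf{Bir}}(\mathbb{P}^m_\mathbf{k})$: there is a finitely generated subgroup $\Gamma\le{\sf{Bir}}(\mathbb{P}^m_\mathbf{k})$ containing $u$ with $\exp(n)\preceq\delta^\Gamma_u(n)$ (where $\delta^\Gamma_u=\infty$ if $u$ has finite order).
   Context: For functions, $f\preceq g$ means there are $C,C',C''>0$ with $f(x)\le Cg(C'x)+C''$. For a finitely generated group $\Gamma$ with finite symmetric generating set $S\ni1$ and $c\in\Gamma$, $\delta_{c,S}(n)=\sup\{m\in\mathbf{N}: c^m\in S^n\}$; its $\simeq$-class $\delta^\Gamma_c$ is independent of $S$. *)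

(* Defs.v *)
From HB Require Import structures.
From mathcomp Require Import all_boot all_order all_algebra.
Set Implicit Arguments. Unset Strict Implicit. Unset Printing Implicit Defensive.
Import Order.TTheory GRing.Theory Num.Theory.
Local Open Scope ring_scope.

(* Polynomial ring k[x_0,...,x_{m-1}] as iterated univariate polynomials:
   mpoly R (m+1) = (mpoly R m)[x_m]. *)
Fixpoint mpoly (R : idomainType) (m : nat) : idomainType :=
  match m with
  | 0 => R
  | m'.+1 => ({poly mpoly R m'} : idomainType)
  end.

Fixpoint mvar (R : idomainType) (m : nat) : nat -> mpoly R m :=
  match m return nat -> mpoly R m with
  | 0 => fun _ => 0
  | m'.+1 => fun i => if i == m' then 'X else (mvar R m' i)%:P
  end.

Fixpoint mconst (R : idomainType) (m : nat) : R -> mpoly R m :=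
  match m return R -> mpoly R m with
  | 0 => fun c => c
  | m'.+1 => fun c => (mconst m' c)%:P
  end.

(* Function field k(P^m) = k(x_0,...,x_{m-1}). *)
Definition ratfun (k : fieldType) (m : nat) : fieldType := {fraction (mpoly k m)}.

Definition rvar (k : fieldType) (m : nat) (i : nat) : ratfun k m :=
  tofrac (mvar k m i).
Definition rconst (k : fieldType) (m : nat) (c : k) : ratfun k m :=
  tofrac (mconst m c).

(* Bir(P^m_k) is (anti-)isomorphic to the group of k-automorphisms of k(P^m);
   an element is represented by the (comorphism) field automorphism. *)
Definition is_bir (k : fieldType) (m : nat) (f : ratfun k m -> ratfun k m) : Prop :=
  [/\ f 1 = 1,
      forall x y, f (x + y) = f x + f y,
      forall x y, f (x * y) = f x * f y,
      bijective f &
      forall c : k, f (rconst m c) = rconst m c].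

Definition word (T : Type) (N : nat) (S : 'I_N -> T -> T) (w : seq 'I_N) : T -> T :=
  foldr (fun i g => S i \o g) id w.

(* Main.v *)
Require Import Defs.
From HB Require Import structures.
From mathcomp Require Import all_boot all_order all_algebra zify ring.
Import Order.TTheory GRing.Theory Num.Theory.
Local Open Scope ring_scope.
Set Implicit Arguments. Unset Strict Implicit.

Local Open Scope quotient_scope.

Definition rmor (R S : nzRingType) (f : R -> S) :=
  [/\ f 1 = 1, forall x y, f (x + y) = f x + f y & forall x y, f (x * y) = f x * f y].
Section Bund.
Variables (R S : nzRingType) (f : R -> S) (H : rmor f).
Definition fb of rmor f := f.
Lemma rmor0 : f 0 = 0.
Proof. case: H => _ hD _; have h := hD 0 0; rewrite addr0 in h; apply: (addrI (f 0)); by rewrite -h addr0. Qed.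
Lemma rmorN x : f (- x) = - f x.
Proof. case: H => _ hD _; apply/eqP; rewrite -subr_eq0 opprK -hD addNr rmor0 //. Qed.
Lemma fb_zmod : zmod_morphism (fb H).
Proof. by move=> x y; rewrite /fb; case: H => _ hD _; rewrite hD rmorN. Qed.
Lemma fb_mon : monoid_morphism (fb H).
Proof. by rewrite /fb; case: H => h1 _ hM; split. Qed.
HB.instance Definition _ := GRing.isZmodMorphism.Build R S (fb H) fb_zmod.
HB.instance Definition _ := GRing.isMonoidMorphism.Build R S (fb H) fb_mon.
Definition fbR : {rmorphism R -> S} := fb H.
End Bund.
Lemma rmor_of (R S : nzRingType) (f : {rmorphism R -> S}) : rmor f.
Proof. by split; [exact: rmorph1 | exact: rmorphD | exact: rmorphM]. Qed.
Lemma rmor_comp (R S T : nzRingType) (f : S -> T) (g : R -> S) :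
  rmor f -> rmor g -> rmor (f \o g).
Proof. by case=> f1 fD fM [g1 gD gM]; split=> /= *; rewrite ?g1 ?f1 ?gD ?fD ?gM ?fM. Qed.
Lemma rmor_id (R : nzRingType) : rmor (@id R).
Proof. by []. Qed.
Lemma rmor_div (F L : fieldType) (f : F -> L) (H : rmor f) x y : f (x / y) = f x / f y.
Proof. by have := fmorph_div (fbR H) x y. Qed.
Lemma rmor_exp (R S : nzRingType) (f : R -> S) (H : rmor f) x i : f (x ^+ i) = f x ^+ i.
Proof. by have := rmorphXn (fbR H) i x. Qed.

Lemma frac_decomp (R : idomainType) (x : {fraction R}) :
  x = tofrac (\n_(repr x)) / tofrac (\d_(repr x)).
Proof.
rewrite -{1}[x]reprK; move: (repr x) => r.
rewrite !piE; apply/eqmodP; rewrite /= FracField.equivfE /FracField.mulf /FracField.invf.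
rewrite !numden_Ratio ?oner_eq0 ?mulf_neq0 ?oner_eq0 ?denom_ratioP //.
by rewrite mulr1 mul1r mulrC.
Qed.

Lemma frac_decomp' (R : idomainType) (x : {fraction R}) :
  exists a b, b != 0 /\ x = tofrac a / tofrac b.
Proof. by exists (\n_(repr x)), (\d_(repr x)); split; [exact: denom_ratioP | exact: frac_decomp]. Qed.

Section Ext.
Variables (R : idomainType) (L : fieldType) (phi : {rmorphism R -> L}).
Hypothesis phi_inj : forall b, b != 0 -> phi b != 0.
Definition ext (x : {fraction R}) : L := phi (\n_(repr x)) / phi (\d_(repr x)).

Lemma extE a b : b != 0 -> ext (tofrac a / tofrac b) = phi a / phi b.
Proof.
move=> b0; rewrite /ext.
have h := frac_decomp (tofrac a / tofrac b).
move: h; set x := tofrac a / tofrac b => h.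
have d0 : \d_(repr x) != 0 by exact: denom_ratioP.
have e : a * \d_(repr x) = \n_(repr x) * b.
  apply/eqP; rewrite -tofrac_eq !tofracM; apply/eqP.
  have hb : tofrac b != 0 :> {fraction R} by rewrite tofrac_eq0.
  have hd : tofrac (\d_(repr x)) != 0 :> {fraction R} by rewrite tofrac_eq0.
  move: h hd; rewrite /x; set D := tofrac (\d_(repr _)); set N := tofrac (\n_(repr _)) => h hd.
  by rewrite -{1}(divfK hb (tofrac a)) h mulrAC divfK.
have pb := phi_inj b0; have pd := phi_inj d0.
apply/eqP; rewrite eq_sym eqr_div //; apply/eqP.
by rewrite -!rmorphM e.
Qed.

Lemma ext_frac a : ext (tofrac a) = phi a.
Proof. by have := extE a (oner_neq0 R); rewrite tofrac1 divr1 rmorph1 divr1. Qed.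

Lemma ext_rmor : rmor ext.
Proof.
split.
- by rewrite -tofrac1 ext_frac rmorph1.
- move=> x y; have [a [b [b0 ->]]] := frac_decomp' x; have [c [d [d0 ->]]] := frac_decomp' y.
  have bd0 : b * d != 0 by rewrite mulf_neq0.
  have hb : tofrac b != 0 :> {fraction R} by rewrite tofrac_eq0.
  have hd : tofrac d != 0 :> {fraction R} by rewrite tofrac_eq0.
  have -> : tofrac a / tofrac b + tofrac c / tofrac d = tofrac (a * d + c * b) / tofrac (b * d) :> {fraction R}.
    by rewrite tofracD !tofracM addf_div.
  rewrite !extE // !rmorphD !rmorphM; have pb := phi_inj b0; have pd := phi_inj d0.
  by rewrite addf_div.
- move=> x y; have [a [b [b0 ->]]] := frac_decomp' x; have [c [d [d0 ->]]] := frac_decomp' y.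
  have bd0 : b * d != 0 by rewrite mulf_neq0.
  have hb : tofrac b != 0 :> {fraction R} by rewrite tofrac_eq0.
  have hd : tofrac d != 0 :> {fraction R} by rewrite tofrac_eq0.
  have -> : tofrac a / tofrac b * (tofrac c / tofrac d) = tofrac (a * c) / tofrac (b * d) :> {fraction R}.
    by rewrite !tofracM mulf_div.
  rewrite !extE // !rmorphM; have pb := phi_inj b0; have pd := phi_inj d0.
  by rewrite mulf_div.
Qed.
End Ext.

Section Ev.
Variables (k : fieldType) (F : comNzRingType) (c0 : {rmorphism k -> F}) (v : nat -> F).
Fixpoint evR (m : nat) : {rmorphism mpoly k m -> F} :=
  match m return {rmorphism mpoly k m -> F} with
  | 0 => c0
  | m'.+1 => (horner_morph (fun x => mulrC (v m') (evR m' x)) : {rmorphism _ -> _})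
  end.

Lemma evR_var m i : (i < m)%N -> evR m (mvar k m i) = v i.
Proof.
elim: m => [//|m IH] /=; rewrite ltnS leq_eqVlt => /orP [/eqP ->|lt].
  by rewrite eqxx horner_morphX.
by rewrite (ltn_eqF lt) horner_morphC IH.
Qed.

Lemma evR_const m c : evR m (mconst m c) = c0 c.
Proof. by elim: m => [//|m IH] /=; rewrite horner_morphC IH. Qed.
End Ev.

Section Gen.
Variable k : fieldType.

Fixpoint mconstR (m : nat) : {rmorphism k -> mpoly k m} :=
  match m return {rmorphism k -> mpoly k m} with
  | 0 => (idfun : {rmorphism k -> k})
  | m'.+1 => ((@polyC _) \o mconstR m' : {rmorphism _ -> _})
  end.

Lemma mconstRE m c : mconstR m c = mconst m c.
Proof. by elim: m => [//|m IH] /=; rewrite IH. Qed.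

Lemma mpoly_uniq (F : nzRingType) m (f g : {rmorphism mpoly k m -> F}) :
  (forall c, f (mconst m c) = g (mconst m c)) ->
  (forall i, (i < m)%N -> f (mvar k m i) = g (mvar k m i)) -> f =1 g.
Proof.
elim: m f g => [|m IH] f g hc hv; first by move=> x; exact: (hc x).
have e : (f \o (@polyC _) : {rmorphism _ -> _}) =1 (g \o (@polyC _) : {rmorphism _ -> _}).
  apply: IH => [c|i lt]; first exact: (hc c).
  by have := hv i (ltnW lt) => /=; rewrite (ltn_eqF lt).
move=> p; rewrite (poly_initial f) (poly_initial g) /horner_morph.
have hX := hv m (ltnSn m); rewrite /= eqxx in hX.
by rewrite hX (eq_map_poly e).
Qed.

Lemma mvar_neq0 m i : (i < m)%N -> mvar k m i != 0.
Proof.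
elim: m => [//|m IH] /=; rewrite ltnS leq_eqVlt => /orP [/eqP ->|lt].
  by rewrite eqxx polyX_eq0.
by rewrite (ltn_eqF lt) polyC_eq0 IH.
Qed.

Variable m : nat.
Local Notation K := (ratfun k m).
Definition c0K : {rmorphism k -> K} := (@tofrac (mpoly k m) \o mconstR m : {rmorphism _ -> _}).
Definition evK (v : nat -> K) : {rmorphism mpoly k m -> K} := evR c0K v m.
Definition injv (v : nat -> K) := forall b, b != 0 -> evK v b != 0.
Definition extK (v : nat -> K) : K -> K := ext (evK v).

Lemma rvar_neq0 i : (i < m)%N -> rvar k m i != 0.
Proof. by move=> lt; rewrite /rvar tofrac_eq0 mvar_neq0. Qed.

Section ExtK.
Variables (v : nat -> K) (hv : injv v).
Lemma extK_rmor : rmor (extK v).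
Proof. exact: ext_rmor. Qed.
Lemma extK_var i : (i < m)%N -> extK v (rvar k m i) = v i.
Proof. by move=> lt; rewrite /extK /rvar ext_frac // evR_var. Qed.
Lemma extK_const c : extK v (rconst m c) = rconst m c.
Proof. by rewrite /extK /rconst ext_frac // /evK evR_const /= mconstRE. Qed.
End ExtK.

Lemma K_uniq (f g : K -> K) : rmor f -> rmor g ->
  (forall c, f (rconst m c) = g (rconst m c)) ->
  (forall i, (i < m)%N -> f (rvar k m i) = g (rvar k m i)) -> f =1 g.
Proof.
move=> hf hg hc hv x; have [a [b [b0 ->]]] := frac_decomp' x.
rewrite (rmor_div hf) (rmor_div hg).
have e : ((fbR hf) \o @tofrac (mpoly k m) : {rmorphism _ -> _}) =1 ((fbR hg) \o @tofrac (mpoly k m) : {rmorphism _ -> _}).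
  by apply: mpoly_uniq => [c|i lt] /=; rewrite /fb; [exact: hc | exact: hv].
by have := e a; have := e b => /= ; rewrite /fb => -> ->.
Qed.
End Gen.

Section Spec.
Variables (k : fieldType) (n : nat) (hn : (0 < n)%N).
Local Notation m := n.+1.
Local Notation K := (ratfun k n.+1).
Local Notation X := (rvar k n.+1).
Local Notation C := (@rconst k n.+1).

Lemma CE c : C c = c0K k m c.
Proof. by rewrite /rconst /c0K /= mconstRE. Qed.
Lemma CM a b : C (a * b) = C a * C b.
Proof. by rewrite !CE rmorphM. Qed.
Lemma CV a : C (a^-1) = (C a)^-1.
Proof. by rewrite !CE fmorphV. Qed.
Lemma C1 : C 1 = 1.
Proof. by rewrite CE rmorph1. Qed.
Lemma C_neq0 a : a != 0 -> C a != 0.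
Proof. by rewrite CE fmorph_eq0. Qed.

Definition evP (w : nat -> mpoly k m) : {rmorphism mpoly k m -> mpoly k m} :=
  evR (mconstR k m) w m.

Lemma evK_tofrac (v : nat -> K) w : (forall i, (i < m)%N -> v i = tofrac (w i)) ->
  evK v =1 (@tofrac (mpoly k m) \o evP w).
Proof.
move=> h; apply: (mpoly_uniq (g := (@tofrac (mpoly k m) \o evP w : {rmorphism _ -> _}))).
  move=> c; rewrite /evK evR_const.
  by change (c0K k m c = tofrac (evP w (mconst m c))); rewrite /evP evR_const.
move=> i lt; rewrite /evK evR_var //.
by change (v i = tofrac (evP w (mvar k m i))); rewrite /evP evR_var // h.
Qed.

Definition inv_on (s : nat -> nat) := forall l, (l < m)%N -> (s l < m)%N /\ s (s l) = l.
Definition nz (c : nat -> k) := forall l, c l != 0.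

Definition vPS (s : nat -> nat) (c : nat -> k) : nat -> K := fun l => C (c l) * X (s l).

Lemma PS_inj s c : inv_on s -> nz c -> injv (vPS s c).
Proof.
move=> hs hc.
pose w l := mconst m (c l) * mvar k m (s l).
pose w' l := mconst m (c (s l))^-1 * mvar k m (s l).
have h1 := evK_tofrac (v := vPS s c) (w := w).
have h2 : (evP w' \o evP w : {rmorphism _ -> _}) =1 (idfun : {rmorphism _ -> _}).
  apply: mpoly_uniq => [c'|i lt].
    change (evP w' (evP w (mconst m c')) = mconst m c').
    by rewrite /evP evR_const mconstRE evR_const mconstRE.
  change (evP w' (evP w (mvar k m i)) = mvar k m i).
  rewrite /evP evR_var // /w rmorphM evR_const evR_var; last by case: (hs i lt).
  rewrite /w'; have [_ ->] := hs i lt.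
  by rewrite !mconstRE mulrA -!mconstRE -rmorphM mulfV // rmorph1 mul1r.
move=> b b0; rewrite h1 /=; last first.
  by move=> i lt; rewrite /vPS /w rmorphM CE /c0K /= mconstRE.
rewrite tofrac_eq0; apply: contra b0 => /eqP e.
by have := h2 b; rewrite /= e rmorph0 => <-.
Qed.

Definition vE : nat -> K := fun l => if l == n then X n * X 0 else X l.
Definition vEi : nat -> K := fun l => if l == n then X n / X 0 else X l.

Lemma E_inj : injv vE.
Proof.
pose w l := if l == n then mvar k m n * mvar k m 0 else mvar k m l.
have h1 := evK_tofrac (v := vE) (w := w).
move=> b b0; rewrite h1 /=; last first.
  by move=> i lt; rewrite /vE /w; case: eqP => _ //; rewrite rmorphM.
rewrite tofrac_eq0.
have e1 : evR (mconstR k m) w n =1 (@polyC _ : {rmorphism _ -> _}).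
  apply: mpoly_uniq => [c|i lt] /=; first by rewrite evR_const /= mconstRE.
  by rewrite evR_var ?(ltnW lt) // /w (ltn_eqF lt) /= (ltn_eqF lt).
have -> : evP w b = b \Po (w n).
  by rewrite /evP /= /horner_morph (eq_map_poly e1).
have hw : size (w n) = 2%N.
  rewrite /w eqxx /= eqxx eq_sym (gtn_eqF hn); apply: size_XmulC; exact: mvar_neq0.
by rewrite -size_poly_eq0 size_comp_poly2 // size_poly_eq0.
Qed.

Definition E := extK vE.
Definition Ei := extK vEi.
Definition PS s c := extK (vPS s c).

Lemma E_rmor : rmor E. Proof. exact: extK_rmor E_inj. Qed.

Lemma X_neq0 i : (i < m)%N -> X i != 0.
Proof. exact: rvar_neq0. Qed.

Lemma Ei_inj : injv vEi.
Proof.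
have h : ((fbR E_rmor) \o evK vEi : {rmorphism _ -> _}) =1 @tofrac (mpoly k m).
  apply: mpoly_uniq => [c|i lt].
    change (E (evK vEi (mconst m c)) = rconst m c).
    by rewrite /evK evR_const -CE; exact: (extK_const E_inj).
  change (E (evK vEi (mvar k m i)) = X i).
  rewrite /evK evR_var // /vEi; case: eqP => [->|ne].
    rewrite (rmor_div E_rmor) /E !(extK_var E_inj) // /vE eqxx eq_sym (gtn_eqF hn).
    by rewrite mulfK // X_neq0.
  by rewrite /E (extK_var E_inj) // /vE; case: eqP.
move=> b b0; apply: contra b0 => /eqP e.
have := h b; change (E (evK vEi b) = tofrac b -> b == 0).
by rewrite e (rmor0 E_rmor) => /esym/eqP; rewrite tofrac_eq0.
Qed.
End Spec.

Lemma L1 (F : fieldType) (a b x y : F) : b != 0 -> y != 0 -> (a * (x * y)) / (b * y) = a / b * x.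
Proof. move=> b0 y0; field; by rewrite b0 y0. Qed.
Lemma L2 (F : fieldType) (a b x y : F) : y != 0 -> a * (x / y) * (b * y) = (a * b) * x.
Proof. move=> y0; field; done. Qed.
Lemma L3 (F : fieldType) (x y : F) : y != 0 -> (x * y) / y = x.
Proof. move=> y0; field; done. Qed.
Lemma L4 (F : fieldType) (x y : F) : y != 0 -> (x / y) * y = x.
Proof. move=> y0; field; done. Qed.

Section Rel.
Variables (k : fieldType) (n : nat) (hn : (0 < n)%N).
Local Notation m := n.+1.
Local Notation K := (ratfun k n.+1).
Local Notation X := (rvar k n.+1).
Local Notation C := (@rconst k n.+1).
Local Notation E := (@E k n).
Local Notation Ei := (@Ei k n).
Local Notation PS := (@PS k n).

Definition swap (i l : nat) := if l == i then n else if l == n then i else l.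
Definition D (c : nat -> k) := PS id c.
Definition tau i := PS (swap i) (fun _ => 1).

Lemma id_inv : inv_on n id. Proof. by []. Qed.
Lemma swap_inv i : (i < m)%N -> inv_on n (swap i).
Proof.
move=> lt l ll; rewrite /swap.
by do ![case: eqP => ? //=]; subst; split=> //; lia.
Qed.
Lemma nz1 : nz (fun _ : nat => 1 : k). Proof. by move=> _; exact: oner_neq0. Qed.

Lemma PS_rmor s c : inv_on n s -> nz c -> rmor (PS s c).
Proof. by move=> hs hc; apply: extK_rmor; apply: PS_inj. Qed.
Lemma PS_var s c l : inv_on n s -> nz c -> (l < m)%N -> PS s c (X l) = C (c l) * X (s l).
Proof. by move=> hs hc lt; rewrite /PS (extK_var (PS_inj hs hc)). Qed.
Lemma PS_const s c a : inv_on n s -> nz c -> PS s c (C a) = C a.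
Proof. by move=> hs hc; rewrite /PS (extK_const (PS_inj hs hc)). Qed.
Lemma Ei_rmor : rmor Ei. Proof. exact: extK_rmor (Ei_inj hn). Qed.
Lemma E_var l : (l < m)%N -> E (X l) = if l == n then X n * X 0 else X l.
Proof. by move=> lt; rewrite /E (extK_var (E_inj hn)). Qed.
Lemma Ei_var l : (l < m)%N -> Ei (X l) = if l == n then X n / X 0 else X l.
Proof. by move=> lt; rewrite /Ei (extK_var (Ei_inj hn)). Qed.
Lemma E_const a : E (C a) = C a. Proof. exact: (extK_const (E_inj hn)). Qed.
Lemma Ei_const a : Ei (C a) = C a. Proof. exact: (extK_const (Ei_inj hn)). Qed.

Lemma D_rmor c : nz c -> rmor (D c). Proof. by move=> hc; exact: PS_rmor. Qed.
Lemma D_var c l : nz c -> (l < m)%N -> D c (X l) = C (c l) * X l.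
Proof. by move=> hc lt; rewrite /D PS_var. Qed.
Lemma D_const c a : nz c -> D c (C a) = C a.
Proof. by move=> hc; rewrite /D PS_const. Qed.
Lemma tau_rmor i : (i < m)%N -> rmor (tau i). Proof. by move=> lt; apply: PS_rmor; [exact: swap_inv|exact: nz1]. Qed.
Lemma tau_var i l : (i < m)%N -> (l < m)%N -> tau i (X l) = X (swap i l).
Proof. by move=> lt ll; rewrite /tau PS_var ?C1 ?mul1r //; [exact: swap_inv|exact: nz1]. Qed.
Lemma tau_const i a : (i < m)%N -> tau i (C a) = C a.
Proof. by move=> lt; rewrite /tau PS_const //; [exact: swap_inv|exact: nz1]. Qed.

Lemma rmorM' (f : K -> K) (H : rmor f) x y : f (x * y) = f x * f y.
Proof. by case: H. Qed.

Lemma D_mul c c' x : nz c -> nz c' ->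
  D c (D c' x) = D (fun l => c l * c' l) x.
Proof.
move=> hc hc'; have hcc : nz (fun l => c l * c' l) by move=> l; rewrite mulf_neq0.
apply: (K_uniq (f := D c \o D c')) => //.
- exact: rmor_comp (D_rmor hc) (D_rmor hc').
- exact: D_rmor.
- by move=> a /=; rewrite !D_const.
move=> l lt /=; rewrite !D_var // (rmorM' (D_rmor hc)) D_const // D_var //.
by rewrite CM mulrCA mulrA.
Qed.

Lemma D_ext c c' x : nz c -> nz c' -> (forall l, (l < m)%N -> c l = c' l) -> D c x = D c' x.
Proof.
move=> hc hc' e; apply: (K_uniq (f := D c)) => //; try exact: D_rmor.
  by move=> a; rewrite !D_const.
by move=> l lt; rewrite !D_var // e.
Qed.

Lemma D1 x : D (fun _ => 1) x = x.
Proof.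
apply: (K_uniq (f := D (fun _ => 1)) (g := id)) => //; first exact: D_rmor nz1.
  by move=> a; rewrite D_const //; exact: nz1.
by move=> l lt; rewrite D_var ?C1 ?mul1r //; exact: nz1.
Qed.

Lemma tau_conj i c x : (i < m)%N -> nz c ->
  tau i (D c (tau i x)) = D (fun l => c (swap i l)) x.
Proof.
move=> lt hc; have hc' : nz (fun l => c (swap i l)) by move=> l.
apply: (K_uniq (f := tau i \o D c \o tau i)) => //.
- by apply: rmor_comp; [apply: rmor_comp|]; [exact: tau_rmor|exact: D_rmor|exact: tau_rmor].
- exact: D_rmor.
- by move=> a /=; rewrite tau_const // D_const // tau_const // D_const.
move=> l ll /=; have [sl ssl] := swap_inv lt ll.
rewrite tau_var // D_var // (rmorM' (tau_rmor lt)) tau_const // tau_var // ssl.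
by rewrite D_var.
Qed.

Lemma tau_inv i x : (i < m)%N -> tau i (tau i x) = x.
Proof.
move=> lt; apply: (K_uniq (f := tau i \o tau i) (g := id)) => //.
- by apply: rmor_comp; exact: tau_rmor.
- by move=> a /=; rewrite !tau_const.
move=> l ll /=; have [sl ssl] := swap_inv lt ll.
by rewrite !tau_var // ssl.
Qed.

Lemma X0_neq0 : X 0 != 0. Proof. exact: X_neq0. Qed.
Lemma n_lt : (n < m)%N. Proof. by []. Qed.
Lemma z_lt : (0 < m)%N. Proof. by []. Qed.
Lemma zn : (0 == n) = false. Proof. by rewrite eq_sym gtn_eqF. Qed.

Lemma E_Ei x : E (Ei x) = x.
Proof.
apply: (K_uniq (f := E \o Ei) (g := id)) => //.
- by apply: rmor_comp; [exact: (@E_rmor k n hn)|exact: Ei_rmor].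
- by move=> a /=; rewrite Ei_const E_const.
move=> l ll /=; rewrite Ei_var //; case: eqP => [->|nl].
  rewrite (rmor_div (@E_rmor k n hn)) !E_var // eqxx zn L3 //; exact: X0_neq0.
by rewrite E_var //; case: eqP.
Qed.

Lemma Ei_E x : Ei (E x) = x.
Proof.
apply: (K_uniq (f := Ei \o E) (g := id)) => //.
- by apply: rmor_comp; [exact: Ei_rmor|exact: (@E_rmor k n hn)].
- by move=> a /=; rewrite E_const Ei_const.
move=> l ll /=; rewrite E_var //; case: eqP => [->|nl].
  rewrite (rmorM' Ei_rmor) !Ei_var // eqxx zn L4 //; exact: X0_neq0.
by rewrite Ei_var //; case: eqP.
Qed.

Lemma D_inv c x : nz c -> D c (D (fun l => (c l)^-1) x) = x.
Proof.
move=> hc; have hc' : nz (fun l => (c l)^-1) by move=> l; rewrite invr_eq0.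
rewrite D_mul //; rewrite -[RHS]D1; apply: D_ext.
- by move=> l; rewrite mulf_neq0 ?invr_eq0.
- exact: nz1.
- by move=> l _; rewrite mulfV.
Qed.

Definition TE (c : nat -> k) l := if l == n then c n / c 0 else c l.
Definition TEi (c : nat -> k) l := if l == n then c n * c 0 else c l.

Lemma E_conj c x : nz c -> E (D c (Ei x)) = D (TE c) x.
Proof.
move=> hc; have hc' : nz (TE c) by move=> l; rewrite /TE; case: ifP => _; rewrite ?mulf_neq0 ?invr_eq0 ?hc.
apply: (K_uniq (f := E \o D c \o Ei)) => //.
- by apply: rmor_comp; [apply: rmor_comp|]; [exact: (@E_rmor k n hn)|exact: D_rmor|exact: Ei_rmor].
- exact: D_rmor.
- by move=> a /=; rewrite Ei_const D_const // E_const D_const.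
move=> l ll /=; rewrite Ei_var // D_var // /TE; case: eqP => [->|nl].
  rewrite (rmor_div (D_rmor hc)) !D_var // (rmor_div (@E_rmor k n hn)) !(rmorM' (@E_rmor k n hn)).
  rewrite !E_const !E_var // eqxx zn L1; [by rewrite CM CV| exact: C_neq0 | exact: X0_neq0].
rewrite D_var // (rmorM' (@E_rmor k n hn)) E_const E_var //.
by case: eqP.
Qed.

Lemma Ei_conj c x : nz c -> Ei (D c (E x)) = D (TEi c) x.
Proof.
move=> hc; have hc' : nz (TEi c) by move=> l; rewrite /TEi; case: ifP => _; rewrite ?mulf_neq0 ?hc.
apply: (K_uniq (f := Ei \o D c \o E)) => //.
- by apply: rmor_comp; [apply: rmor_comp|]; [exact: Ei_rmor|exact: D_rmor|exact: (@E_rmor k n hn)].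
- exact: D_rmor.
- by move=> a /=; rewrite E_const D_const // Ei_const D_const.
move=> l ll /=; rewrite E_var // D_var // /TEi; case: eqP => [->|nl].
  rewrite (rmorM' (D_rmor hc)) !D_var // !(rmorM' Ei_rmor).
  rewrite !Ei_const !Ei_var // eqxx zn L2; [by rewrite CM | exact: X0_neq0].
rewrite D_var // (rmorM' Ei_rmor) Ei_const Ei_var //.
by case: eqP.
Qed.

Lemma bir_of (f g : K -> K) : rmor f -> rmor g -> (forall x, f (g x) = x) ->
  (forall x, g (f x) = x) -> (forall a, f (C a) = C a) -> is_bir f.
Proof.
by case=> f1 fD fM _ fg gf fc; split=> //; exists g.
Qed.

Lemma E_bir : is_bir E.
Proof. exact: (bir_of (@E_rmor k n hn) Ei_rmor E_Ei Ei_E E_const). Qed.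
Lemma Ei_bir : is_bir Ei.
Proof. exact: (bir_of Ei_rmor (@E_rmor k n hn) Ei_E E_Ei Ei_const). Qed.
Lemma tau_bir i : (i < m)%N -> is_bir (tau i).
Proof. move=> lt; apply: (bir_of (tau_rmor lt) (tau_rmor lt)) => [x|x|a]; [exact: tau_inv|exact: tau_inv|exact: tau_const]. Qed.
Lemma D_bir c : nz c -> is_bir (D c).
Proof.
move=> hc; have hc' : nz (fun l => (c l)^-1) by move=> l; rewrite invr_eq0.
apply: (bir_of (D_rmor hc) (D_rmor hc')) => [x|x|a]; first exact: D_inv.
  rewrite D_mul // -[RHS]D1; apply: D_ext.
  - by move=> l; rewrite mulf_neq0 ?invr_eq0.
  - exact: nz1.
  - by move=> l _; rewrite mulVf.
by rewrite D_const.
Qed.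
End Rel.

Section Dist.
Variables (k : fieldType) (n : nat) (hn : (0 < n)%N).
Local Notation m := n.+1.
Local Notation K := (ratfun k n.+1).
Local Notation E := (@E k n).
Local Notation Ei := (@Ei k n).
Local Notation D := (@D k n).
Local Notation tau := (@tau k n).
Local Notation swap := (@swap n).
Local Notation TE := (@TE k n).
Local Notation TEi := (@TEi k n).

Lemma nzero : (n == 0%N) = false. Proof. by rewrite gtn_eqF. Qed.

Definition expv (a : k) (p q : int) : nat -> k :=
  fun l => if l == n then a ^ p else if l == 0%N then a ^ q else 1.

Lemma nz_expv a p q : a != 0 -> nz (expv a p q).
Proof. by move=> a0 l; rewrite /expv; case: ifP => _; [|case: ifP => _]; rewrite ?expfz_neq0 ?oner_neq0. Qed.
Lemma nz_sw (c : nat -> k) i : nz c -> nz (fun l => c (swap i l)). Proof. by move=> h l. Qed.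
Lemma nz_TE (c : nat -> k) : nz c -> nz (TE c).
Proof. by move=> hc l; rewrite /TE; case: ifP => _; rewrite ?mulf_neq0 ?invr_eq0 ?hc. Qed.
Lemma nz_TEi (c : nat -> k) : nz c -> nz (TEi c).
Proof. by move=> hc l; rewrite /TEi; case: ifP => _; rewrite ?mulf_neq0 ?hc. Qed.

Lemma ex_div (a : k) (x y : int) : a != 0 -> a ^ x / a ^ y = a ^ (x - y).
Proof. by move=> a0; rewrite expfzDr // invr_expz. Qed.
Lemma ex_mul (a : k) (x y : int) : a != 0 -> a ^ x * a ^ y = a ^ (x + y).
Proof. by move=> a0; rewrite expfzDr. Qed.
Lemma zn' : (0%N == n) = false. Proof. by rewrite eq_sym nzero. Qed.

Definition Gf (x : K) := E (tau 0 (E (tau 0 x))).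
Definition Gif (x : K) := tau 0 (Ei (tau 0 (Ei x))).

Lemma ltz : (0 < m)%N. Proof. by []. Qed.

Lemma G_conj a p q x : a != 0 ->
  Gf (D (expv a p q) (Gif x)) = D (expv a (p - (q - p)) (q - p)) x.
Proof.
move=> a0; have hc := nz_expv p q a0; rewrite /Gf /Gif.
have h1 := nz_sw 0 hc; have h2 := nz_TE h1; have h3 := nz_sw 0 h2.
rewrite (tau_conj hn _ ltz hc) (E_conj hn _ h1) (tau_conj hn _ ltz h2) (E_conj hn _ h3).
apply: D_ext; [exact: nz_TE | exact: nz_expv |].
move=> l ll; rewrite /TE /swap /expv.
have [el|ln] := eqVneq l n.
  by subst l; rewrite !eqxx !nzero !eqxx /= zn' !ex_div.
have [el|l0] := eqVneq l 0%N.
  by subst l; rewrite !eqxx !nzero /= zn' ex_div.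
by rewrite (negbTE ln) (negbTE l0) /= (negbTE ln) (negbTE l0) /=.
Qed.

Lemma Gi_conj a p q x : a != 0 ->
  Gif (D (expv a p q) (Gf x)) = D (expv a (p + q) (q + (p + q))) x.
Proof.
move=> a0; have hc := nz_expv p q a0; rewrite /Gf /Gif.
have h1 := nz_TEi hc; have h2 := nz_sw 0 h1; have h3 := nz_TEi h2.
rewrite (Ei_conj hn _ hc) (tau_conj hn _ ltz h1) (Ei_conj hn _ h2) (tau_conj hn _ ltz h3).
apply: D_ext; [exact: nz_sw | exact: nz_expv |].
move=> l ll; rewrite /TEi /swap /expv.
have [el|ln] := eqVneq l n.
  by subst l; rewrite !eqxx !nzero /= ?zn' ?eqxx /= ?ex_mul.
have [el|l0] := eqVneq l 0%N.
  by subst l; rewrite !eqxx !nzero /= ?zn' ?eqxx /= !ex_mul.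
by rewrite (negbTE ln) (negbTE l0) /= (negbTE ln) (negbTE l0) /=.
Qed.

Definition Tz (pq : int * int) := (pq.1 - (pq.2 - pq.1), pq.2 - pq.1).
Definition Tz' (pq : int * int) := (pq.1 + pq.2, pq.2 + (pq.1 + pq.2)).

Lemma iterG j a pq x : a != 0 ->
  iter j Gf (D (expv a pq.1 pq.2) (iter j Gif x)) = D (expv a (iter j Tz pq).1 (iter j Tz pq).2) x.
Proof.
move=> a0; elim: j x => [//|j IH] x.
by rewrite [iter j.+1 Gif x]iterSr iterS IH G_conj // [iter j.+1 Tz pq]iterS.
Qed.

Lemma iterGi j a pq x : a != 0 ->
  iter j Gif (D (expv a pq.1 pq.2) (iter j Gf x)) = D (expv a (iter j Tz' pq).1 (iter j Tz' pq).2) x.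
Proof.
move=> a0; elim: j x => [//|j IH] x.
by rewrite [iter j.+1 Gf x]iterSr iterS IH Gi_conj // [iter j.+1 Tz' pq]iterS.
Qed.

Definition P j := iter j Tz (1, 0).
Definition P' j := iter j Tz' (1, 0).

Lemma Pinv j : (P' j).2 = - (P j).2 /\ (P j).1 = (P' j).1 + (P' j).2.
Proof.
elim: j => [|j [IH1 IH2]]; first by [].
rewrite /P /P' !iterS -/(P j) -/(P' j) /Tz /Tz' /=.
move: IH1 IH2; case: (P j) => p q; case: (P' j) => p' q' /= -> ->.
by split; lia.
Qed.

Lemma Pgrow j : 0 <= - (P j).2 /\ - (P j).2 <= (P j).1 /\ (2 ^ j)%N%:Z <= (P j).1.
Proof.
elim: j => [|j [IH1 [IH2 IH3]]]; first by [].
rewrite /P !iterS -/(P j) /Tz /=.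
have e : (2 ^ j.+1)%N%:Z = 2 * (2 ^ j)%N%:Z by rewrite expnS PoszM.
move: IH1 IH2 IH3; rewrite e; case: (P j) => p q /=.
move: (2 ^ j)%N%:Z => t; lia.
Qed.

Definition Lz j := absz ((P j).1 + (P' j).1).

Lemma LzE j : (Lz j)%:Z = (P j).1 + (P' j).1.
Proof.
rewrite /Lz gez0_abs //; have [h1 h2] := Pinv j; have [g1 [g2 g3]] := Pgrow j.
move: h1 h2 g1 g2 g3; case: (P j) => p q; case: (P' j) => p' q' /=; lia.
Qed.

Lemma Lz_ge j : (2 ^ j <= Lz j)%N.
Proof.
rewrite -lez_nat LzE; have [h1 h2] := Pinv j; have [g1 [g2 g3]] := Pgrow j.
move: h1 h2 g1 g2 g3; case: (P j) => p q; case: (P' j) => p' q' /=.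
move: (2 ^ j)%N%:Z => t; lia.
Qed.

Definition ev1 (i : nat) (b : k) : nat -> k := fun l => if l == i then b else 1.

Lemma nz_ev1 i b : b != 0 -> nz (ev1 i b).
Proof. by move=> b0 l; rewrite /ev1; case: ifP => _; rewrite ?oner_neq0. Qed.

Lemma block_val i j a x : (i < m)%N -> a != 0 ->
  tau i (iter j Gf (D (expv a 1 0) (iter j Gif (iter j Gif (D (expv a 1 0) (iter j Gf (tau i x)))))))
  = D (ev1 i (a ^+ Lz j)) x.
Proof.
move=> lt a0.
have := iterGi j (1, 0) (tau i x) a0; rewrite /= => ->.
have := iterG j (1, 0) (D (expv a (iter j Tz' (1, 0)).1 (iter j Tz' (1, 0)).2) (tau i x)) a0.
rewrite /= => ->; rewrite -/(P j) -/(P' j).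
rewrite D_mul; try exact: nz_expv.
have hL : nz (expv a (Lz j)%:Z 0) by exact: nz_expv.
rewrite (D_ext (c' := expv a (Lz j)%:Z 0) _ _ hL); last first.
- move=> l _; rewrite /expv LzE; have [h1 _] := Pinv j.
  case: ifP => _; first by rewrite ex_mul.
  by case: ifP => _; rewrite ?mulr1 // ex_mul // h1 addrN.
- by move=> l; rewrite mulf_neq0 //; exact: nz_expv.
rewrite (tau_conj hn _ lt hL); apply: D_ext; [exact: (nz_sw i hL) | by apply: nz_ev1; rewrite expf_neq0 |].
move=> l ll; rewrite /expv /ev1 /swap.
have [el|li] := eqVneq l i.
  by subst l; rewrite eqxx.
have [eln|ln] := eqVneq l n.
  subst l; have -> : (i == n) = false by apply/eqP => e; rewrite e eqxx in li.
  by case: ifP.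
by rewrite (negbTE ln); case: ifP.
Qed.

End Dist.

Section Final.
Variables (k : fieldType) (n : nat) (hn : (0 < n)%N) (cu : nat -> k) (hcu : nz cu).
Local Notation m := n.+1.
Local Notation K := (ratfun k n.+1).
Local Notation E := (@E k n).
Local Notation Ei := (@Ei k n).
Local Notation D := (@D k n).
Local Notation tau := (@tau k n).
Local Notation swap := (@swap n).
Local Notation expv := (@expv k n).
Local Notation Gf := (@Gf k n).
Local Notation Gif := (@Gif k n).
Local Notation ev1 := (@ev1 k).

Definition gen (j : nat) : K -> K :=
  if j == 0%N then id else if j == 1%N then E else if j == 2%N then Ei
  else if (j < 3 + m)%N then tau (j - 3)%N
  else if (j < 3 + m + m)%N then D (expv (cu (j - 3 - m)%N) 1 0)
  else D (expv (cu (j - 3 - m - m)%N)^-1 1 0).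

Lemma gen_tau i : (i < m)%N -> gen (3 + i)%N = tau i.
Proof.
move=> lt; rewrite /gen; have -> : (3 + i < 3 + m)%N by rewrite ltn_add2l.
by rewrite /= addKn.
Qed.
Lemma gen_s i : (i < m)%N -> gen (3 + m + i)%N = D (expv (cu i) 1 0).
Proof.
move=> lt; rewrite /gen.
have -> : (3 + m + i == 0)%N = false by lia.
have -> : (3 + m + i == 1)%N = false by lia.
have -> : (3 + m + i == 2)%N = false by lia.
have -> : (3 + m + i < 3 + m)%N = false by lia.
have -> : (3 + m + i < 3 + m + m)%N by lia.
by have -> : (3 + m + i - 3 - m = i)%N by lia.
Qed.
Lemma gen_si i : (i < m)%N -> gen (3 + m + m + i)%N = D (expv (cu i)^-1 1 0).
Proof.
move=> lt; rewrite /gen.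
have -> : (3 + m + m + i == 0)%N = false by lia.
have -> : (3 + m + m + i == 1)%N = false by lia.
have -> : (3 + m + m + i == 2)%N = false by lia.
have -> : (3 + m + m + i < 3 + m)%N = false by lia.
have -> : (3 + m + m + i < 3 + m + m)%N = false by lia.
by have -> : (3 + m + m + i - 3 - m - m = i)%N by lia.
Qed.

Lemma nz_cuV i : (cu i)^-1 != 0. Proof. by rewrite invr_eq0. Qed.

Lemma gen_bir j : is_bir (gen j).
Proof.
rewrite /gen; case: ifP => _.
  by split=> //; exists id.
case: ifP => _; first exact: E_bir.
case: ifP => _; first exact: Ei_bir.
case: ifP => h; first by apply: tau_bir; lia.
case: ifP => _; apply: D_bir; apply: nz_expv; [exact: hcu | exact: nz_cuV].
Qed.

Lemma Dpair a x : a != 0 -> D (expv a^-1 1 0) (D (expv a 1 0) x) = x.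
Proof.
move=> a0; rewrite D_mul; try by apply: nz_expv; rewrite ?invr_eq0.
rewrite -[RHS]D1; apply: D_ext.
- by move=> l; rewrite mulf_neq0 //; apply: nz_expv; rewrite ?invr_eq0.
- exact: nz1.
- move=> l _; rewrite /expv; case: ifP => _; first by rewrite !expr1z mulVf.
  by case: ifP => _; rewrite ?mulr1.
Qed.

Definition invc (j : nat) : nat :=
  if j == 0%N then 0 else if j == 1%N then 2 else if j == 2%N then 1
  else if (j < 3 + m)%N then j else if (j < 3 + m + m)%N then (j + m)%N else (j - m)%N.

Lemma gen_inv j x : (j < (2 + 3 * m).+1)%N -> gen (invc j) (gen j x) = x /\ gen j (gen (invc j) x) = x.
Proof.
move=> lt; rewrite /invc.
case: (eqVneq j 0%N) => [->|j0] //.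
case: (eqVneq j 1%N) => [->|j1]; first by split; [exact: Ei_E | exact: E_Ei].
case: (eqVneq j 2%N) => [->|j2]; first by split; [exact: E_Ei | exact: Ei_E].
case: ifP => h1.
  have -> : j = (3 + (j - 3))%N by lia.
  by rewrite gen_tau; [split; apply: tau_inv | ]; lia.
case: ifP => h2.
  have -> : j = (3 + m + (j - 3 - m))%N by lia.
  have -> : (3 + m + (j - 3 - m) + m = 3 + m + m + (j - 3 - m))%N by lia.
  rewrite gen_s ?gen_si; try lia.
  split; first exact: Dpair.
  by have := Dpair x (nz_cuV (j - 3 - m)); rewrite invrK.
have -> : j = (3 + m + m + (j - 3 - m - m))%N by lia.
have -> : (3 + m + m + (j - 3 - m - m) - m = 3 + m + (j - 3 - m - m))%N by lia.
rewrite gen_s ?gen_si; try lia.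
split; last exact: Dpair.
by have := Dpair x (nz_cuV (j - 3 - m - m)); rewrite invrK.
Qed.

Lemma invc_lt j : (j < (2 + 3 * m).+1)%N -> (invc j < (2 + 3 * m).+1)%N.
Proof. by move=> lt; rewrite /invc; repeat case: ifP => ?; lia. Qed.

Definition wordn (ws : seq nat) : K -> K := foldr (fun j g => gen j \o g) id ws.

Lemma wordn_cat s1 s2 x : wordn (s1 ++ s2) x = wordn s1 (wordn s2 x).
Proof. by elim: s1 => [//|j s IH] /=; rewrite IH. Qed.

Lemma wordn_nseq j w x : wordn (flatten (nseq j w)) x = iter j (wordn w) x.
Proof. by elim: j => [//|j IH] /=; rewrite wordn_cat IH. Qed.

Definition Gw := [:: 1; 3; 1; 3]%N.
Definition Giw := [:: 3; 2; 3; 2]%N.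

Lemma gen3 : gen 3%N = tau 0%N. Proof. by have := gen_tau (ltn0Sn n); rewrite addn0. Qed.

Lemma wordn_Gw x : wordn Gw x = Gf x.
Proof. by rewrite /wordn /= gen3. Qed.
Lemma wordn_Giw x : wordn Giw x = Gif x.
Proof. by rewrite /wordn /= gen3. Qed.

Definition blk j i := [:: 3 + i]%N ++ flatten (nseq j Gw) ++ [:: 3 + m + i]%N ++
  flatten (nseq j Giw) ++ flatten (nseq j Giw) ++ [:: 3 + m + i]%N ++ flatten (nseq j Gw) ++ [:: 3 + i]%N.

Lemma iter_ext j (f g : K -> K) x : (forall y, f y = g y) -> iter j f x = iter j g x.
Proof. by move=> h; elim: j => [//|j IH] /=; rewrite IH h. Qed.

Lemma wordn_blk j i x : (i < m)%N -> wordn (blk j i) x = D (ev1 i (cu i ^+ Lz j)) x.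
Proof.
move=> lt; rewrite /blk !wordn_cat !wordn_nseq /wordn /= -/wordn.
rewrite gen_tau // gen_s //.
rewrite !(iter_ext _ _ wordn_Gw) !(iter_ext _ _ wordn_Giw).
exact: block_val.
Qed.

Lemma wordn_flat (f : nat -> seq nat) s x :
  wordn (flatten (map f s)) x = foldr (fun i g => wordn (f i) \o g) id s x.
Proof. by elim: s => [//|i s IH] /=; rewrite wordn_cat IH. Qed.

Lemma prod_D (F : nat -> K -> K) (b : nat -> k) s x : nz b -> uniq s ->
  (forall i y, i \in s -> F i y = D (ev1 i (b i)) y) ->
  foldr (fun i g => F i \o g) id s x = D (fun l => if l \in s then b l else 1) x.
Proof.
move=> hb; elim: s x => [|i s IH] x.
  move=> _ _ /=; rewrite -[LHS](D1 x); apply: D_ext; [exact: nz1|by move=> l; rewrite oner_neq0|by []].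
move=> /andP [nis us] hF /=.
have hs : nz (fun l => if l \in s then b l else 1) by move=> l; case: ifP; rewrite ?oner_neq0.
rewrite IH //; last by move=> i' y h; apply: hF; rewrite in_cons h orbT.
rewrite hF ?mem_head // D_mul //; last exact: nz_ev1.
apply: D_ext.
- by move=> l; rewrite mulf_neq0 //; apply: nz_ev1.
- by move=> l; case: ifP; rewrite ?oner_neq0.
move=> l _; rewrite /ev1 in_cons; have [->|li] := eqVneq l i.
  by rewrite (negbTE nis) mulr1.
by rewrite mul1r.
Qed.

Lemma tau_D i a z x : (i < m)%N -> a != 0 ->
  tau i (D (expv a z 0) (tau i x)) = D (ev1 i (a ^ z)) x.
Proof.
move=> lt a0; have hL : nz (expv a z 0) by exact: nz_expv.
rewrite (tau_conj hn _ lt hL); apply: D_ext; [exact: (@nz_sw k n _ i hL) | by apply: nz_ev1; rewrite expfz_neq0 |].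
move=> l ll; rewrite /expv /ev1 /swap.
have [el|li] := eqVneq l i.
  by subst l; rewrite eqxx.
have [eln|ln] := eqVneq l n.
  subst l; have -> : (i == n) = false by apply/eqP => e; rewrite e eqxx in li.
  by case: ifP.
by rewrite (negbTE ln); case: ifP.
Qed.

Definition ublk i := [:: 3 + i; 3 + m + i; 3 + i]%N.

Lemma wordn_ublk i x : (i < m)%N -> wordn (ublk i) x = D (ev1 i (cu i)) x.
Proof.
move=> lt; rewrite /ublk /wordn /= gen_tau // gen_s // tau_D // expr1z.
Qed.

Definition Wu := flatten (map ublk (iota 0 m)).
Definition W j := flatten (map (blk j) (iota 0 m)).

Lemma wordn_Wu x : wordn Wu x = D cu x.
Proof.
rewrite /Wu wordn_flat (prod_D (b := cu)) ?iota_uniq //; last first.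
  by move=> i y; rewrite mem_iota => /andP [_ h]; apply: wordn_ublk.
apply: D_ext => //; first by move=> l; case: ifP; rewrite ?oner_neq0.
by move=> l ll; rewrite mem_iota ll.
Qed.

Lemma wordn_W j x : wordn (W j) x = D (fun l => cu l ^+ Lz j) x.
Proof.
have hb : nz (fun l => cu l ^+ Lz j) by move=> l; rewrite expf_neq0.
rewrite /W wordn_flat (prod_D (b := fun l => cu l ^+ Lz j)) ?iota_uniq //; last first.
  by move=> i y; rewrite mem_iota => /andP [_ h]; apply: wordn_blk.
apply: D_ext => //; first by move=> l; case: ifP; rewrite ?oner_neq0.
by move=> l ll; rewrite mem_iota ll.
Qed.

Lemma size_flat_nseq j (w : seq nat) : size (flatten (nseq j w)) = (j * size w)%N.
Proof. by elim: j => [//|j IH] /=; rewrite size_cat IH mulSn. Qed.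

Lemma size_flat_map (f : nat -> seq nat) s c : (forall i, size (f i) = c) ->
  size (flatten (map f s)) = (size s * c)%N.
Proof. by move=> h; elim: s => [//|i s IH] /=; rewrite size_cat IH h mulSn. Qed.

Lemma size_W j : size (W j) = (m * (4 + 16 * j))%N.
Proof.
have h : forall i, size (blk j i) = (4 + 16 * j)%N.
  by move=> i; rewrite /blk !size_cat !size_flat_nseq /=; lia.
by rewrite /W (size_flat_map _ h) size_iota.
Qed.

Definition NN := (2 + 3 * m).+1.

Lemma all_flat_nseq (P : pred nat) j w : all P w -> all P (flatten (nseq j w)).
Proof. by move=> h; elim: j => [//|j IH] /=; rewrite all_cat h IH. Qed.

Lemma all_flat_map (P : pred nat) (f : nat -> seq nat) s :
  (forall i, i \in s -> all P (f i)) -> all P (flatten (map f s)).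
Proof.
elim: s => [//|i s IH] h /=; rewrite all_cat h ?mem_head //.
by apply: IH => i' hi; apply: h; rewrite in_cons hi orbT.
Qed.

Lemma all_W j : all (fun c => c < NN)%N (W j).
Proof.
apply: all_flat_map => i; rewrite mem_iota => /andP [_ lt].
have hG : all (fun c => c < NN)%N Gw by rewrite /Gw /NN /=; lia.
have hGi : all (fun c => c < NN)%N Giw by rewrite /Giw /NN /=; lia.
have h1 : (3 + i < NN)%N by rewrite /NN; lia.
have h2 : (3 + m + i < NN)%N by rewrite /NN; lia.
by rewrite /blk !all_cat (all_flat_nseq _ hG) (all_flat_nseq _ hGi) /= h1 h2.
Qed.

Lemma all_Wu : all (fun c => c < NN)%N Wu.
Proof.
apply: all_flat_map => i; rewrite mem_iota => /andP [_ lt].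
rewrite /ublk /= /NN; apply/and4P; split=> //; lia.
Qed.

Definition SS (j : 'I_NN) : K -> K := gen j.

Lemma word_map ws x : all (fun c => c < NN)%N ws -> word SS (map inord ws) x = wordn ws x.
Proof.
elim: ws => [//|c ws IH] /= /andP [hc hw].
by rewrite /SS inordK // IH.
Qed.
End Final.

Unset Implicit Arguments. Set Strict Implicit.

Theorem lemma3p2 (k : fieldType) (m : nat) (hm : (2 <= m)%N)
    (uu : 'I_m -> k) (huu : forall i, uu i != 0)
    (u : ratfun k m -> ratfun k m) (hbir : is_bir u)
    (hdiag : forall i : 'I_m, u (rvar k m i) = rconst m (uu i) * rvar k m i) :
  exists (N : nat) (S : 'I_N -> ratfun k m -> ratfun k m),
    [/\ forall j, is_bir (S j),
        exists j, forall x, S j x = x,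
        forall j, exists j', forall x, S j' (S j x) = x /\ S j (S j' x) = x,
        exists w : seq 'I_N, forall x, u x = word S w x &
        exists C C' C'' : nat, [/\ (0 < C)%N, (0 < C')%N, (0 < C'')%N &
          forall n : nat, exists (p : nat) (w : seq 'I_N),
            [/\ (size w <= C' * n)%N,
                forall x, iter p u x = word S w x &
                (3 ^ n <= C * p + C'')%N]]].
Proof.
case: m hm uu huu u hbir hdiag => [//|n] hm uu huu u hbir hdiag.
have hn : (0 < n)%N by [].
pose cu (l : nat) : k := oapp uu 1 (insub l : option 'I_n.+1).
have hcu : nz cu.
  by move=> l; rewrite /cu; case: insubP => [i _ _|_] /=; [exact: huu | exact: oner_neq0].
have cuE : forall l (ll : (l < n.+1)%N), cu l = uu (Ordinal ll).
  move=> l ll; rewrite /cu; case: insubP => [i _ ei|]; last by rewrite ll.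
  by congr uu; apply: val_inj.
have hr : rmor u by case: hbir => h1 hD hM _ _; split.
have hu : forall x, u x = D cu x.
  apply: K_uniq => //; first exact: D_rmor.
    by move=> c; case: hbir => _ _ _ _ ->; rewrite D_const.
  move=> l ll; have := hdiag (Ordinal ll) => /= ->.
  by rewrite D_var // cuE.
have hiter : forall L x, iter L u x = D (fun l => cu l ^+ L) x.
  elim=> [|L IH] x.
    rewrite -[LHS](D1 x); apply: D_ext; [exact: nz1 | by move=> l; rewrite oner_neq0 | by []].
  rewrite iterS IH hu D_mul //; last by move=> l; rewrite expf_neq0.
  apply: D_ext.
  - by move=> l; rewrite mulf_neq0 ?expf_neq0.
  - by move=> l; rewrite expf_neq0.
  - by move=> l _; rewrite exprS.
exists (NN n), (SS cu); split.
- by move=> j; exact: (gen_bir hn hcu).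
- by exists ord0.
- move=> j; exists (inord (invc n j)) => x; rewrite /SS inordK; last exact: invc_lt.
  exact: (gen_inv hn hcu).
- by exists (map inord (Wu n)) => x; rewrite word_map ?all_Wu // (wordn_Wu hn hcu) hu.
exists 1%N, (36 * n.+1)%N, 1%N; split => // t.
case: t => [|t].
  by exists 0%N, [::]; split.
exists (Lz (2 * t.+1)), (map inord (W n (2 * t.+1))); split.
- rewrite size_map size_W // (mulnC 36) -mulnA leq_mul2l; apply/orP; right; lia.
- by move=> x; rewrite word_map ?all_W // (wordn_W hn hcu) hiter.
- have h1 := Lz_ge hn (2 * t.+1); rewrite expnM in h1.
  have h2 : (3 ^ t.+1 <= (2 ^ 2) ^ t.+1)%N by rewrite leq_exp2r.
  rewrite mul1n; apply: leq_trans (leq_addr _ _); exact: leq_trans h2 h1.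
Qed.
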